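(* The polynomials in $S(\mathfrak h)^{W_I}$ separate the points $\widetilde\lambda$, $\lambda\in P_I^+$: for all $\lambda\neq\lambda'$ in $P_I^+$ there exists $q\in S(\mathfrak h)^{W_I}$ with $q(\widetilde\lambda)\neq q(\widetilde{\lambda'})$.
   Context: Let $\mathfrak a$ be a Euclidean space with inner product $(\cdot,\cdot)$, $\mathfrak h=\mathfrak a\otimes\mathbb C$, and $S(\mathfrak h)$ the symmetric algebra, viewed as polynomial functions on $\mathfrak h^*$. Let $R\subset\mathfrak a^*$ be a root system with Weyl group $W$ (acting on $\mathfrak h$ and $S(\mathfrak h)$), positive roots $R^+$, simple reflections $S$. Let $P$ be the weight lattice, $P^+$ the dominant weights and $P^-=-P^+$. Let $k=(k_\alpha)_{\alpha\in R}$ be a $W$-invariant multiplicity function with $k_\alpha\ge0$ and $\rho(k)=\frac12\sum_{\alpha\in R^+}k_\alpha\alpha$. For $\lambda\in P$ let $v(\lambda)$ be the minimal length element of $W$ with $v(\lambda)\lambda\in P^-$ and $\widetilde\lambda=\lambda-v(\lambda)^{-1}\rho(k)$. Let $I\subset S$, $W_I$ the parabolic subgroup generated by $I$, $R_I^+$ its positive roots and $P_I^+=\{\lambda\in P:(\lambda,\alpha)\ge0\ \forall\alpha\in R_I^+\}$. *)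

(* Defs.v *)
(* root systems in a^* = 'rV[R]_n (R real closed field),
   polynomials S(h) = {mpoly C[n]} (complex coefficients). *)
From HB Require Import structures.
From mathcomp Require Import all_boot all_order all_algebra.
From mathcomp Require Import complex mpoly.
Set Implicit Arguments. Unset Strict Implicit. Unset Printing Implicit Defensive.
Import Order.TTheory GRing.Theory Num.Theory.
Local Open Scope ring_scope.

Section RootSystems.
Variables (R : rcfType) (n : nat).
Local Notation V := 'rV[R]_n.
Local Notation C := (complex R).

Definition dotv (u v : V) : R := (u *m v^T) 0 0.

(* reflection s_a : x |-> x - 2(x,a)/(a,a) a, acting on row vectors x |-> x *m refl_mx a *)
Definition refl_mx (a : V) : 'M[R]_n := 1%:M - (2 / dotv a a) *: (a^T *m a).

Definition is_integer (x : R) : Prop := exists z : int, x = z%:~R.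

Definition coroot_pairing (b a : V) : R := 2 * dotv b a / dotv a a.

(* crystallographic (possibly non-reduced) root system, finite, spanning *)
Definition root_system (Rt : seq V) : Prop :=
  [/\ uniq Rt, 0 \notin Rt, <<Rt>>%VS = fullv,
      (forall a b, a \in Rt -> b \in Rt -> b *m refl_mx a \in Rt) &
      (forall a b, a \in Rt -> b \in Rt -> is_integer (coroot_pairing b a))].

Definition regular (Rt : seq V) (z : V) : Prop := forall a, a \in Rt -> dotv a z != 0.

Definition pos_roots (Rt : seq V) (z : V) : seq V := [seq a <- Rt | 0 < dotv a z].

Definition simple_rootb (Rt : seq V) (z : V) (a : V) : bool :=
  (a \in pos_roots Rt z) &&
  ~~ has (fun b => has (fun c => a == b + c) (pos_roots Rt z)) (pos_roots Rt z).

(* the element s_{a1} o ... o s_{ak} of W for the word [:: a1; ...; ak] *)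
Definition word_mx (ws : seq V) : 'M[R]_n := foldr (fun a M => M *m refl_mx a) 1%:M ws.

Definition in_W (Rt : seq V) (w : 'M[R]_n) : Prop :=
  exists ws, (forall a, a \in ws -> a \in Rt) /\ w = word_mx ws.

Definition multiplicity (Rt : seq V) (k : V -> R) : Prop :=
  forall w a, in_W Rt w -> a \in Rt -> k (a *m w) = k a.

Definition weight (Rt : seq V) (lam : V) : Prop :=
  forall a, a \in Rt -> is_integer (coroot_pairing lam a).

Definition dom_weight (Rt : seq V) (z : V) (lam : V) : Prop :=
  weight Rt lam /\ forall a, a \in pos_roots Rt z -> 0 <= dotv lam a.

Definition antidom_weight (Rt : seq V) (z : V) (lam : V) : Prop :=
  dom_weight Rt z (- lam).

Definition rho (Rt : seq V) (z : V) (k : V -> R) : V :=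
  2^-1 *: \sum_(a <- pos_roots Rt z) k a *: a.

(* w is the minimal length element v(lam) of W with w lam in P^-;
   length is measured by words in the simple reflections *)
Definition is_v (Rt : seq V) (z : V) (lam : V) (w : 'M[R]_n) : Prop :=
  exists ws, [/\ all (simple_rootb Rt z) ws, w = word_mx ws,
    antidom_weight Rt z (lam *m w) &
    forall ws', all (simple_rootb Rt z) ws' ->
      antidom_weight Rt z (lam *m word_mx ws') -> (size ws <= size ws')%N].

Definition is_tilde (Rt : seq V) (z : V) (k : V -> R) (lam mu : V) : Prop :=
  exists w, is_v Rt z lam w /\ mu = lam - rho Rt z k *m invmx w.

Definition in_WI (I : seq V) (w : 'M[R]_n) : Prop :=
  exists ws, all (mem I) ws /\ w = word_mx ws.

Definition dom_weight_I (Rt : seq V) (z : V) (I : seq V) (lam : V) : Prop :=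
  weight Rt lam /\
  forall a, a \in pos_roots Rt z -> a \in <<I>>%VS -> 0 <= dotv lam a.

Definition toC (x : V) : 'rV[C]_n := map_mx (real_complex R) x.
Definition toC_mx (w : 'M[R]_n) : 'M[C]_n := map_mx (real_complex R) w.

Definition peval (q : {mpoly C[n]}) (x : 'rV[C]_n) : C := meval (fun i => x 0 i) q.

(* q in S(h)^{W_I}: (w.q)(x) = q(w^{-1} x) equals q(x) for all w in W_I, x in h^* *)
Definition WI_invariant (I : seq V) (q : {mpoly C[n]}) : Prop :=
  forall w, in_WI I w -> forall x : 'rV[C]_n,
    peval q (x *m invmx (toC_mx w)) = peval q x.

End RootSystems.

(* Main.v *)
Require Import Defs.
From HB Require Import structures.
From mathcomp Require Import all_boot all_order all_algebra.
From mathcomp Require Import complex mpoly.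
From mathcomp.algebra_tactics Require Import ring lra.
From mathcomp Require Import zify.
From Stdlib Require Import ClassicalEpsilon.
Set Implicit Arguments. Unset Strict Implicit. Unset Printing Implicit Defensive.
Import Order.TTheory GRing.Theory Num.Theory.
Local Open Scope ring_scope.




Section Basics.
Variables (R : rcfType) (n : nat).
Local Notation V := 'rV[R]_n.

Lemma dotvE (u v : V) : dotv u v = \sum_j u 0 j * v 0 j.
Proof. by rewrite /dotv mxE; apply: eq_bigr => j _; rewrite mxE. Qed.

Lemma dotvC (u v : V) : dotv u v = dotv v u.
Proof. by rewrite !dotvE; apply: eq_bigr => j _; rewrite mulrC. Qed.

Lemma dotvDl (u v w : V) : dotv (u + v) w = dotv u w + dotv v w.
Proof. by rewrite !dotvE -big_split; apply: eq_bigr => j _; rewrite mxE mulrDl. Qed.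

Lemma dotvZl c (u w : V) : dotv (c *: u) w = c * dotv u w.
Proof. by rewrite !dotvE mulr_sumr; apply: eq_bigr => j _; rewrite mxE mulrA. Qed.

Lemma dotvNl (u w : V) : dotv (- u) w = - dotv u w.
Proof. by rewrite -scaleN1r dotvZl mulN1r. Qed.

Lemma dotvBl (u v w : V) : dotv (u - v) w = dotv u w - dotv v w.
Proof. by rewrite dotvDl dotvNl. Qed.

Lemma dotvDr (u v w : V) : dotv w (u + v) = dotv w u + dotv w v.
Proof. by rewrite !(dotvC w) dotvDl. Qed.

Lemma dotvZr c (u w : V) : dotv w (c *: u) = c * dotv w u.
Proof. by rewrite !(dotvC w) dotvZl. Qed.

Lemma dotvNr (u w : V) : dotv w (- u) = - dotv w u.
Proof. by rewrite !(dotvC w) dotvNl. Qed.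

Lemma dotvBr (u v w : V) : dotv w (u - v) = dotv w u - dotv w v.
Proof. by rewrite !(dotvC w) dotvBl. Qed.

Lemma dotv0l (w : V) : dotv 0 w = 0.
Proof. by rewrite -(scale0r (0:V)) dotvZl mul0r. Qed.

Lemma dotv0r (w : V) : dotv w 0 = 0.
Proof. by rewrite dotvC dotv0l. Qed.

Lemma dotv_ge0 (u : V) : 0 <= dotv u u.
Proof. by rewrite dotvE; apply: sumr_ge0 => j _; rewrite -expr2 sqr_ge0. Qed.

Lemma dotv_eq0 (u : V) : (dotv u u == 0) = (u == 0).
Proof.
apply/idP/idP; last by move/eqP->; rewrite dotv0l.
rewrite dotvE psumr_eq0 => [/allP H|j _]; last by rewrite -expr2 sqr_ge0.
apply/eqP/rowP => j; rewrite mxE; have := H j (mem_index_enum _).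
by rewrite -expr2 sqrf_eq0 => /eqP.
Qed.

Lemma dotv_gt0 (u : V) : u != 0 -> 0 < dotv u u.
Proof. by move=> H; rewrite lt_def dotv_eq0 H dotv_ge0. Qed.

Lemma dotv_mulmx (u v : V) (M : 'M[R]_n) : dotv (u *m M) v = dotv u (v *m M^T).
Proof. by rewrite /dotv trmx_mul trmxK mulmxA. Qed.

Lemma mx11_mul (B : 'M[R]_1) (a : V) : B *m a = B 0 0 *: a.
Proof. by rewrite {1}[B]mx11_scalar mul_scalar_mx. Qed.

Lemma reflE (a x : V) :
  x *m refl_mx a = x - (2 * dotv x a / dotv a a) *: a.
Proof.
rewrite /refl_mx mulmxBr mulmx1 -scalemxAr mulmxA mx11_mul scalerA.
rewrite /dotv mulrC mulrA; congr (_ - _ *: _); ring.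
Qed.

Lemma refl_tr (a : V) : (refl_mx a)^T = refl_mx a.
Proof. by rewrite /refl_mx linearB /= linearZ /= trmx1 trmx_mul trmxK. Qed.

Lemma mx_ext (A B : 'M[R]_n) : (forall x : V, x *m A = x *m B) -> A = B.
Proof. by move=> H; apply/row_matrixP => i; rewrite !rowE H. Qed.

Lemma dot_refl (a x : V) : dotv (x *m refl_mx a) a = - dotv x a.
Proof.
have [->|a0] := eqVneq a 0; first by rewrite !dotv0r oppr0.
rewrite reflE dotvBl dotvZl mulfVK; last by rewrite dotv_eq0.
by ring.
Qed.

Lemma reflK (a : V) : a != 0 -> refl_mx a *m refl_mx a = 1%:M.
Proof.
move=> a0; apply: mx_ext => x; rewrite mulmx1 mulmxA (reflE a (x *m _)) dot_refl.
rewrite reflE mulrN mulNr scaleNr opprK subrK //.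
Qed.

End Basics.



Section Words.
Variables (R : rcfType) (n : nat).
Local Notation V := 'rV[R]_n.

Lemma word_cons (a : V) ws : word_mx (a :: ws) = word_mx ws *m refl_mx a.
Proof. by []. Qed.

Lemma word_nil : word_mx [::] = 1%:M :> 'M[R]_n.
Proof. by []. Qed.

Lemma word_cat (ws1 ws2 : seq V) :
  word_mx (ws1 ++ ws2) = word_mx ws2 *m word_mx ws1.
Proof.
elim: ws1 => [|a ws1 IH] /=; first by rewrite mulmx1.
by rewrite IH mulmxA.
Qed.

Lemma word_rcons (ws : seq V) b : word_mx (rcons ws b) = refl_mx b *m word_mx ws.
Proof. by rewrite -cats1 word_cat /= mul1mx. Qed.

Lemma word_tr (ws : seq V) : (word_mx ws)^T = word_mx (rev ws).
Proof.
elim: ws => [|a ws IH] /=; first by rewrite trmx1.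
by rewrite trmx_mul IH refl_tr rev_cons word_rcons.
Qed.

Lemma word_orth (ws : seq V) : (forall a, a \in ws -> a != 0) ->
  word_mx ws *m (word_mx ws)^T = 1%:M /\ (word_mx ws)^T *m word_mx ws = 1%:M.
Proof.
elim: ws => [|a ws IH] H /=; first by rewrite trmx1 mulmx1.
have [H1 H2] : word_mx ws *m (word_mx ws)^T = 1%:M /\ (word_mx ws)^T *m word_mx ws = 1%:M.
  by apply: IH => b bin; apply: H; rewrite inE bin orbT.
have a0 : a != 0 by apply: H; rewrite inE eqxx.
rewrite trmx_mul refl_tr; split.
  by rewrite !mulmxA -(mulmxA (word_mx ws)) reflK // mulmx1 H1.
by rewrite !mulmxA -(mulmxA (refl_mx a)) H2 mulmx1 reflK.
Qed.

Lemma dotv_orth (W : 'M[R]_n) (x y : V) : W *m W^T = 1%:M ->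
  dotv (x *m W) (y *m W) = dotv x y.
Proof. by move=> H; rewrite dotv_mulmx -mulmxA H mulmx1. Qed.

Lemma refl_scale (a : V) c : c != 0 -> refl_mx (c *: a) = refl_mx a.
Proof.
move=> c0; apply: mx_ext => x; rewrite !reflE !dotvZl !dotvZr scalerA.
have [->|a0] := eqVneq a 0; first by rewrite !scaler0.
have A0 : dotv a a != 0 by rewrite dotv_eq0.
congr (_ - _ *: _); field; by rewrite A0 c0.
Qed.

Lemma refl_conj (W : 'M[R]_n) (b : V) : W *m W^T = 1%:M -> W^T *m W = 1%:M ->
  refl_mx b *m W = W *m refl_mx (b *m W).
Proof.
move=> H1 H2; apply: mx_ext => x; rewrite !mulmxA !reflE dotv_orth //.
by rewrite dotv_orth // mulmxBl scalemxAl.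
Qed.

End Words.



Section Roots.
Variables (R : rcfType) (n : nat) (Rt : seq 'rV[R]_n) (z : 'rV[R]_n).
Hypothesis HR : root_system Rt.
Hypothesis Hz : regular Rt z.
Local Notation V := 'rV[R]_n.
Local Notation P := (pos_roots Rt z).
Local Notation simple := (simple_rootb Rt z).

Lemma root_neq0 a : a \in Rt -> a != 0.
Proof. by case: HR => _ H0 _ _ _ ain; apply: contraNneq H0 => <-. Qed.

Lemma root_refl a b : a \in Rt -> b \in Rt -> b *m refl_mx a \in Rt.
Proof. by case: HR => _ _ _ H _; apply: H. Qed.

Lemma refl_self (a : V) : a != 0 -> a *m refl_mx a = - a.
Proof.
move=> a0; rewrite reflE mulfK ?dotv_eq0 //.
by rewrite scaler_nat mulr2n opprD addrA subrr sub0r.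
Qed.

Lemma root_opp a : a \in Rt -> - a \in Rt.
Proof. by move=> ain; rewrite -refl_self ?root_neq0 ?root_refl. Qed.

Lemma posP a : (a \in P) = (a \in Rt) && (0 < dotv a z).
Proof. by rewrite mem_filter andbC. Qed.

Lemma posneg a : a \in Rt -> (0 < dotv a z) || (dotv a z < 0).
Proof. by move=> /Hz; rewrite neq_lt orbC. Qed.

Lemma simple_pos a : simple a -> a \in P.
Proof. by case/andP. Qed.

Lemma simple_root a : simple a -> a \in Rt.
Proof. by move/simple_pos; rewrite posP => /andP[]. Qed.

Lemma simple_z a : simple a -> 0 < dotv a z.
Proof. by move/simple_pos; rewrite posP => /andP[]. Qed.

Lemma simple_nsum a b c : simple a -> b \in P -> c \in P -> a != b + c.
Proof.
case/andP=> _ /hasPn H bP cP; have /hasPn := H b bP.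
by move=> /(_ c cP).
Qed.

Lemma word_root (ws : seq V) a : all (mem Rt) ws -> a \in Rt -> a *m word_mx ws \in Rt.
Proof.
elim: ws a => [|b ws IH] a /= ; first by rewrite mulmx1.
by case/andP=> bin H ain; rewrite mulmxA root_refl // IH.
Qed.

Lemma word_orthR (ws : seq V) : all (mem Rt) ws ->
  word_mx ws *m (word_mx ws)^T = 1%:M /\ (word_mx ws)^T *m word_mx ws = 1%:M.
Proof. by move=> /allP H; apply: word_orth => a /H; apply: root_neq0. Qed.

Lemma count_lt (T : eqType) (p1 p2 : pred T) (s : seq T) x :
  (forall y, p1 y -> p2 y) -> x \in s -> p2 x -> ~~ p1 x -> (count p1 s < count p2 s)%N.
Proof.
move=> H12; elim: s => [//|y s IH] /=; rewrite inE => /orP[/eqP<-|xs] p2x p1x.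
  by rewrite p2x (negbTE p1x) add0n add1n ltnS; apply: sub_count.
by rewrite -addnS; apply: leq_add; [case: (p1 y) (H12 y) => //= ->| apply: IH].
Qed.

Lemma pos_sum_simple b : b \in P ->
  exists ss : seq V, all simple ss /\ b = \sum_(g <- ss) g.
Proof.
move=> bP; move: {2}(count (fun c => dotv c z < dotv b z) P) (leqnn (count (fun c => dotv c z < dotv b z) P)) => N.
elim: N b bP => [|N IH] b bP HN.
  case sb: (simple b); first by exists [:: b]; rewrite /= sb big_seq1.
  move: sb; rewrite /simple_rootb bP /= => /negbFE/hasP[c cP /hasP[d dP /eqP bcd]].
  have : (0 < count (fun c0 : V => (dotv c0 z < dotv b z)%R) P)%N.
    rewrite -has_count; apply/hasP; exists c => //; rewrite bcd dotvDl ltrDl.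
    by move: dP; rewrite posP => /andP[].
  by rewrite lt0n -leqn0 HN.
case sb: (simple b); first by exists [:: b]; rewrite /= sb big_seq1.
move: sb; rewrite /simple_rootb bP /= => /negbFE/hasP[c cP /hasP[d dP /eqP bcd]].
have czP : 0 < dotv c z by move: cP; rewrite posP => /andP[].
have dzP : 0 < dotv d z by move: dP; rewrite posP => /andP[].
rewrite {1}bcd.
have [sc [Hc ->]] : exists ss : seq V, all simple ss /\ c = \sum_(g <- ss) g.
  apply: IH => //; rewrite -ltnS; apply: leq_trans HN.
  apply: (@count_lt _ _ _ _ c) => //=.
  - by move=> y /lt_le_trans; apply; rewrite bcd dotvDl lerDl ltW.
  - by rewrite bcd dotvDl ltrDl.
  - by rewrite ltxx.
have [sd [Hd ->]] : exists ss : seq V, all simple ss /\ d = \sum_(g <- ss) g.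
  apply: IH => //; rewrite -ltnS; apply: leq_trans HN.
  apply: (@count_lt _ _ _ _ d) => //=.
  - by move=> y /lt_le_trans; apply; rewrite bcd dotvDl lerDr ltW.
  - by rewrite bcd dotvDl ltrDr.
  - by rewrite ltxx.
by exists (sc ++ sd); rewrite all_cat Hc Hd big_cat.
Qed.


Lemma simple_diff a g : simple a -> simple g -> a != g -> g - a \in Rt -> False.
Proof.
move=> sa sg ag H; have /orP[Hp|Hn] := posneg H.
  have : g != a + (g - a) by apply: simple_nsum => //; [exact: simple_pos | rewrite posP H].
  by rewrite addrC subrK eqxx.
have H' : a - g \in P by rewrite posP -opprB root_opp //= dotvNl oppr_gt0.
have : a != g + (a - g) by apply: simple_nsum => //; exact: simple_pos.
by rewrite addrC subrK eqxx.
Qed.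

Lemma simple_obtuse a g : simple a -> simple g -> a != g -> dotv g a <= 0.
Proof.
move=> sa sg ag; case: HR => _ _ _ _ Hint.
rewrite leNgt; apply/negP => Hpos.
have A0 : 0 < dotv a a by apply: dotv_gt0; apply: root_neq0; apply: simple_root.
have G0 : 0 < dotv g g by apply: dotv_gt0; apply: root_neq0; apply: simple_root.
have [z1 Hz1] := Hint a g (simple_root sa) (simple_root sg).
have [z2 Hz2] := Hint g a (simple_root sg) (simple_root sa).
rewrite /coroot_pairing in Hz1 Hz2.
have p0 : 0 < 2 * dotv g a / dotv a a by apply: divr_gt0 => //; apply: mulr_gt0.
have q0 : 0 < 2 * dotv a g / dotv g g by rewrite dotvC; apply: divr_gt0 => //; apply: mulr_gt0.
rewrite Hz1 ltr0z in p0; rewrite Hz2 ltr0z in q0.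
have [e1|ne1] := eqVneq z1 1.
  apply: (simple_diff sa sg ag).
  suff <- : g *m refl_mx a = g - a by apply: root_refl; apply: simple_root.
  by rewrite reflE Hz1 e1 scale1r.
have [e2|ne2] := eqVneq z2 1.
  have ga : g != a by rewrite eq_sym.
  apply: (simple_diff sg sa ga).
  suff <- : a *m refl_mx g = a - g by apply: root_refl; apply: simple_root.
  by rewrite reflE Hz2 e2 scale1r.
have h1 : (2 : R) <= z1%:~R by rewrite -[2 : R]/((2:int)%:~R) ler_int; lia.
have h2 : (2 : R) <= z2%:~R by rewrite -[2 : R]/((2:int)%:~R) ler_int; lia.
rewrite -Hz1 ler_pdivlMr // in h1; rewrite -Hz2 ler_pdivlMr // in h2.
have : dotv (g - a) (g - a) <= 0.
  rewrite (dotvC a g) in h2; rewrite !dotvBl !dotvBr (dotvC a g); lra.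
move=> H; have : dotv (g - a) (g - a) == 0 by rewrite eq_le H dotv_ge0.
rewrite dotv_eq0 subr_eq0 => /eqP E.
by move: ag; rewrite E eqxx.
Qed.

Lemma dotv_suml (s : seq V) x : dotv (\sum_(g <- s) g) x = \sum_(g <- s) dotv g x.
Proof.
elim: s => [|g s IH]; first by rewrite !big_nil dotv0l.
by rewrite !big_cons dotvDl IH.
Qed.

Lemma dotv_sumr (s : seq V) x : dotv x (\sum_(g <- s) g) = \sum_(g <- s) dotv x g.
Proof.
by rewrite dotvC dotv_suml; apply: eq_bigr => g _; rewrite dotvC.
Qed.

Lemma sum_pos_has (s : seq V) (Q : pred V) (f : V -> R) :
  (forall g, g \in s -> Q g -> 0 < f g) -> has Q s -> 0 < \sum_(g <- s | Q g) f g.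
Proof.
elim: s => [//|g s IH] H /=; rewrite big_cons.
have H' : forall g0, g0 \in s -> Q g0 -> 0 < f g0.
  by move=> g0 g0s; apply: H; rewrite inE g0s orbT.
have ge0 : 0 <= \sum_(j <- s | Q j) f j.
  by rewrite big_seq_cond; apply: sumr_ge0 => j /andP[js Qj]; apply: ltW; apply: H'.
case Qg: (Q g) => /=.
  by move=> _; apply: ltr_wpDr => //; apply: H; rewrite ?inE ?eqxx.
by apply: IH.
Qed.

Lemma sum_const_seq (s : seq V) (a : V) : \sum_(g <- s) a = (size s)%:R *: a.
Proof.
elim: s => [|g s IH]; first by rewrite big_nil scale0r.
by rewrite big_cons IH /= -{1}(scale1r a) -scalerDl -natr1 addrC.
Qed.

Lemma key a b : simple a -> b \in P -> dotv (b *m refl_mx a) z < 0 ->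
  exists c, c != 0 /\ b = c *: a.
Proof.
move=> sa bP Hneg.
have [ss [Hss Eb]] := pos_sum_simple bP.
have b'P : - (b *m refl_mx a) \in P.
  have bR : b \in Rt by move: bP; rewrite posP => /andP[].
  rewrite posP dotvNl oppr_gt0 Hneg andbT.
  by apply: root_opp; apply: root_refl => //; apply: simple_root.
have [ss' [Hss' Eb']] := pos_sum_simple b'P.
set c0 := 2 * dotv b a / dotv a a.
have EL : \sum_(g <- ss ++ ss') g = c0 *: a.
  by rewrite big_cat /= -Eb -Eb' reflE opprB addrC subrK.
have [Hh|Hh] := boolP (has (fun g => g != a) (ss ++ ss')).
  exfalso.
  move: EL; rewrite (bigID (fun g => g == a)) /=.
  rewrite (eq_bigr (fun _ => a)); last by move=> g /eqP.
  rewrite -big_filter sum_const_seq => EL.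
  set u := \sum_(g <- ss ++ ss' | g != a) g in EL.
  set m := (size _)%:R in EL.
  have Eu : u = (c0 - m) *: a by rewrite scalerBl -EL [m *: a + u]addrC addrK.
  have uz : 0 < dotv u z.
    rewrite /u.
    have -> : forall (s : seq V) (Q : pred V), dotv (\sum_(g <- s | Q g) g) z = \sum_(g <- s | Q g) dotv g z.
      move=> s Q; elim: s => [|g s IH]; first by rewrite !big_nil dotv0l.
      by rewrite !big_cons; case: (Q g); rewrite ?dotvDl IH.
    apply: sum_pos_has Hh => g gin _; apply: simple_z.
    by move: gin; rewrite mem_cat => /orP[] gin; [apply: (allP Hss) | apply: (allP Hss')].
  have ua : dotv u a <= 0.
    rewrite /u.
    have -> : forall (s : seq V) (Q : pred V), dotv (\sum_(g <- s | Q g) g) a = \sum_(g <- s | Q g) dotv g a.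
      move=> s Q; elim: s => [|g s IH]; first by rewrite !big_nil dotv0l.
      by rewrite !big_cons; case: (Q g); rewrite ?dotvDl IH.
    rewrite big_seq_cond; apply: sumr_le0 => g /andP[gin ga].
    apply: simple_obtuse => //; last by rewrite eq_sym.
    by move: gin; rewrite mem_cat => /orP[] gin; [apply: (allP Hss) | apply: (allP Hss')].
  have Az : 0 < dotv a z by apply: simple_z.
  have A0 : 0 < dotv a a by apply: dotv_gt0; apply: root_neq0; apply: simple_root.
  rewrite Eu dotvZl in uz ua.
  rewrite pmulr_lgt0 // in uz; rewrite dotvZl pmulr_lle0 // in ua; lra.
have Hall : all (fun g => g == a) ss.
  apply/allP => g gin; apply: contraNT Hh => ga; apply/hasP; exists g => //.
  by rewrite mem_cat gin.
have Eb2 : b = (size ss)%:R *: a.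
  rewrite Eb -sum_const_seq big_seq [RHS]big_seq; apply: eq_bigr => g gin.
  by apply/eqP; apply: (allP Hall).
exists (size ss)%:R; split => //.
apply: contraTneq (root_neq0 (_ : b \in Rt)) => [E|]; first by rewrite Eb2 E scale0r eqxx.
by move: bP; rewrite posP => /andP[].
Qed.

Lemma all_simple_Rt (ws : seq V) : all simple ws -> all (mem Rt) ws.
Proof. by move/allP => H; apply/allP => a /H /simple_root. Qed.

Lemma deletion (ws : seq V) b : all simple ws -> b \in Rt -> 0 < dotv b z ->
  dotv (b *m word_mx ws) z < 0 ->
  exists i, (i < size ws)%N /\
    refl_mx b *m word_mx ws = word_mx (take i ws ++ drop i.+1 ws).
Proof.
elim: ws => [|a ws IH] /=; first by rewrite mulmx1 => _ _ H1 H2; move: (lt_trans H1 H2); rewrite ltxx.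
case/andP=> sa Hws bR bz Hneg.
have gR : b *m word_mx ws \in Rt by apply: word_root => //; apply: all_simple_Rt.
have /orP[gp|gn] := posneg gR; last first.
  have [i [ilt E]] := IH Hws bR bz gn.
  by exists i.+1; split => //; rewrite mulmxA E.
have gP : b *m word_mx ws \in P by rewrite posP gR.
rewrite mulmxA in Hneg.
have [c [c0 Ec]] := key sa gP Hneg.
exists 0%N; split => //=; rewrite drop0.
have [O1 O2] := word_orthR (all_simple_Rt Hws).
by rewrite mulmxA refl_conj // Ec refl_scale // -mulmxA reflK ?mulmx1 // root_neq0 ?simple_root.
Qed.

Definition domJ (J : seq V) (p : V) :=
  forall a, a \in P -> a \in <<J>>%VS -> 0 <= dotv p a.

Lemma span_word (J : seq V) (ws : seq V) x : all (mem J) ws -> x \in <<J>>%VS ->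
  x *m word_mx ws \in <<J>>%VS.
Proof.
elim: ws x => [|a ws IH] x /=; first by rewrite mulmx1.
case/andP=> aJ Hws xJ; rewrite mulmxA reflE.
by rewrite rpredB ?rpredZ ?IH // memv_span.
Qed.

Lemma fund (J : seq V) : all simple J -> forall ws, all (mem J) ws ->
  forall p q, domJ J p -> domJ J (p *m word_mx ws) ->
  (forall a, a \in J -> dotv p a = 0 -> dotv q a = 0) -> q *m word_mx ws = q.
Proof.
move=> HJ ws; move: {2}(size ws) (leqnn (size ws)) => N.
elim: N ws => [|N IH] ws.
  by rewrite leqn0 size_eq0 => /eqP -> _ p q _ _ _; rewrite mulmx1.
case/lastP: ws => [|ws' b]; first by move=> _ _ p q _ _ _; rewrite mulmx1.
rewrite size_rcons ltnS all_rcons => Hsz /andP[bJ Hws'] p q Hp Hpw Hq.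
have sb : simple b by apply: (allP HJ).
have Hws's : all simple ws'.
  by apply/allP => x /(allP Hws') xJ; apply: (allP HJ).
have bR := simple_root sb.
have bz := simple_z sb.
have gR : b *m word_mx ws' \in Rt by apply: word_root => //; apply: all_simple_Rt.
have [O1 O2] := word_orthR (all_simple_Rt Hws's).
rewrite word_rcons in Hpw *.
have /orP[gp|gn] := posneg gR.
  have H1 : 0 <= dotv (p *m (refl_mx b *m word_mx ws')) (b *m word_mx ws').
    apply: Hpw; first by rewrite posP gR.
    by apply: span_word => //; apply: memv_span.
  rewrite mulmxA dotv_orth // dot_refl oppr_ge0 in H1.
  have H2 : 0 <= dotv p b by apply: Hp; [apply: simple_pos | apply: memv_span].
  have pb : dotv p b = 0 by apply/eqP; rewrite eq_le H1 H2.
  have qb := Hq b bJ pb.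
  have Ep : p *m refl_mx b = p by rewrite reflE pb mulr0 mul0r scale0r subr0.
  have Eq : q *m refl_mx b = q by rewrite reflE qb mulr0 mul0r scale0r subr0.
  rewrite mulmxA Ep in Hpw; rewrite mulmxA Eq.
  by apply: (IH ws' Hsz Hws' p q Hp Hpw Hq).
have [i [ilt E]] := deletion Hws's bR bz gn.
rewrite E in Hpw *.
apply: (IH _ _ _ p q Hp Hpw Hq).
  rewrite size_cat size_take size_drop ilt; apply: (leq_trans _ Hsz).
  apply: (@leq_trans (i + (size ws' - i))); first by rewrite leq_add2l leq_sub2l.
  by rewrite subnKC // ltnW.
by rewrite all_cat; apply/andP; split; apply/allP => x xin; apply: (allP Hws');
  [apply: mem_take xin | apply: mem_drop xin].
Qed.

End Roots.



Section Rho.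
Variables (R : rcfType) (n : nat) (Rt : seq 'rV[R]_n) (z : 'rV[R]_n) (k : 'rV[R]_n -> R).
Hypothesis HR : root_system Rt.
Hypothesis Hz : regular Rt z.
Hypothesis Hk : multiplicity Rt k.
Hypothesis Hk0 : forall a, a \in Rt -> 0 <= k a.
Local Notation V := 'rV[R]_n.
Local Notation P := (pos_roots Rt z).
Local Notation simple := (simple_rootb Rt z).

Lemma dotv_suml_gen (I : Type) (s : seq I) (Q : pred I) (F : I -> V) x :
  dotv (\sum_(b <- s | Q b) F b) x = \sum_(b <- s | Q b) dotv (F b) x.
Proof.
elim: s => [|g s IH]; first by rewrite !big_nil dotv0l.
by rewrite !big_cons; case: (Q g); rewrite ?dotvDl IH.
Qed.

Lemma inv_orth (W : 'M[R]_n) : W *m W^T = 1%:M -> invmx W = W^T.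
Proof.
move=> H; have [Wu _] := mulmx1_unit H.
by rewrite -[invmx W]mulmx1 -H mulmxA mulVmx // mul1mx.
Qed.

Lemma rho_simple a : simple a -> 0 <= dotv (rho Rt z k) a.
Proof.
move=> sa; rewrite /rho dotvZl; apply: mulr_ge0; first by rewrite invr_ge0 ler0n.
rewrite dotv_suml_gen (bigID (fun b => 0 < dotv (b *m refl_mx a) z)) /=.
have aR := simple_root sa.
have a0 := root_neq0 HR aR.
set s := refl_mx a.
have ss : s *m s = 1%:M by apply: reflK.
have sinv : forall x : V, x *m s *m s = x by move=> x; rewrite -mulmxA ss mulmx1.
have Wa : in_W Rt s.
  by exists [:: a]; split; [move=> x; rewrite inE => /eqP -> | rewrite /= mul1mx].
apply: addr_ge0.
  rewrite -big_filter.
  set P1 := [seq b <- P | 0 < dotv (b *m s) z].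
  set S1 := \sum_(b <- P1) _.
  suff E : S1 = - S1.
    by have -> : S1 = 0 by lra.
  have uP1 : uniq P1.
    by apply: filter_uniq; apply: filter_uniq; case: HR.
  have inP1 : forall x, (x \in P1) = [&& x \in Rt, 0 < dotv x z & 0 < dotv (x *m s) z].
    by move=> x; rewrite mem_filter posP andbC andbA.
  have pe : perm_eq P1 [seq x *m s | x <- P1].
    apply: uniq_perm => //.
      by rewrite map_inj_uniq // => x y E; rewrite -(sinv x) E sinv.
    move=> x; apply/idP/idP.
      move=> xin; rewrite -(sinv x); apply: map_f.
      move: xin; rewrite !inP1 sinv => /and3P[xR xz xsz].
      by rewrite xsz xz root_refl.
    case/mapP => y yin ->; move: yin; rewrite !inP1 sinv => /and3P[yR yz ysz].
    by rewrite ysz yz root_refl.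
  rewrite /S1; transitivity (\sum_(b <- [seq x *m s | x <- P1]) dotv (k b *: b) a).
    exact: perm_big _ pe.
  rewrite big_map -sumrN; apply: eq_big_seq => b.
  rewrite inP1 => /and3P[bR _ _].
  by rewrite Hk // !dotvZl dot_refl mulrN.
rewrite big_seq_cond; apply: sumr_ge0 => b /andP[bP Hb].
have bR : b \in Rt by move: bP; rewrite posP => /andP[].
have bsR : b *m s \in Rt by apply: root_refl.
have Hn : dotv (b *m s) z < 0.
  by move: (posneg Hz bsR); rewrite (negbTE Hb).
have [c [c0 Ebc]] := key HR Hz sa bP Hn.
rewrite dotvZl; apply: mulr_ge0; first by apply: Hk0.
have bz : 0 < dotv b z by move: bP; rewrite posP => /andP[].
have az := simple_z sa.
rewrite Ebc dotvZl in bz; rewrite Ebc dotvZl; apply: mulr_ge0; last by apply: dotv_ge0.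
by rewrite pmulr_lgt0 // in bz; apply: ltW.
Qed.

Lemma rho_dom b : b \in P -> 0 <= dotv (rho Rt z k) b.
Proof.
move=> bP; have [ss [Hss ->]] := pos_sum_simple bP.
rewrite dotv_sumr big_seq; apply: sumr_ge0 => g gin; apply: rho_simple.
exact: (allP Hss).
Qed.

End Rho.



Section Core.
Variables (R : rcfType) (n : nat) (Rt : seq 'rV[R]_n) (z : 'rV[R]_n)
  (k : 'rV[R]_n -> R) (I : seq 'rV[R]_n).
Hypothesis HR : root_system Rt.
Hypothesis Hz : regular Rt z.
Hypothesis Hk : multiplicity Rt k.
Hypothesis Hk0 : forall a, a \in Rt -> 0 <= k a.
Hypothesis HI : all (simple_rootb Rt z) I.
Local Notation V := 'rV[R]_n.
Local Notation P := (pos_roots Rt z).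
Local Notation simple := (simple_rootb Rt z).

Lemma core lam lam' mu mu' ws :
  dom_weight_I Rt z I lam -> dom_weight_I Rt z I lam' -> lam != lam' ->
  is_tilde Rt z k lam mu -> is_tilde Rt z k lam' mu' ->
  all (mem I) ws -> mu *m word_mx ws != mu'.
Proof.
move=> [_ Hl] [_ Hl'] ll' [w [[wv [Hwv Ew Hanti _]] Emu]] [w' [[wv' [Hwv' Ew' Hanti' _]] Emu']] Hws.
apply/eqP => E.
have HwsS : all simple ws by apply/allP => x /(allP Hws) /(allP HI).
have [O1 O2] := word_orthR HR (all_simple_Rt HwsS).
have [v1 v2] := word_orthR HR (all_simple_Rt Hwv).
have [v1' v2'] := word_orthR HR (all_simple_Rt Hwv').
subst w w'.
rewrite inv_orth // in Emu; rewrite inv_orth // in Emu'.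
set v := word_mx wv in v1 v2 Emu Hanti; set v' := word_mx wv' in v1' v2' Emu' Hanti'.
set u := word_mx ws in E O1 O2.
set y := lam *m v in Hanti; set y' := lam' *m v' in Hanti'.
set r := rho Rt z k in Emu Emu'.
have Elam : lam = y *m v^T by rewrite /y -mulmxA v1 mulmx1.
have Elam' : lam' = y' *m v'^T by rewrite /y' -mulmxA v1' mulmx1.
set J := [seq a <- Rt | simple a].
have HJ : all simple J by apply/allP => x; rewrite mem_filter => /andP[].
have memJ : forall s, all simple s -> all (mem J) s.
  by move=> s /allP Hs; apply/allP => x xs; rewrite /= mem_filter (Hs x xs) (simple_root (Hs x xs)).
set g := word_mx (wv' ++ ws ++ rev wv).
have Eg : g = v^T *m u *m v'.
  by rewrite /g !word_cat -word_tr.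
have HgJ : all (mem J) (wv' ++ ws ++ rev wv).
  by apply: memJ; rewrite !all_cat Hwv' HwsS all_rev Hwv.
set p := r - y.
have Epg : p *m g = r - y'.
  have : (y - r) *m v^T *m u *m v' = y' - r.
    by rewrite mulmxBl -Elam -Emu E Emu' mulmxBl -mulmxA v2' mulmx1.
  by rewrite /p Eg !mulmxA -[r - y]opprB !mulNmx => ->; rewrite opprB.
have ydom : forall a, a \in P -> dotv y a <= 0.
  by move=> a aP; have := (proj2 Hanti) a aP; rewrite dotvNl oppr_ge0.
have y'dom : forall a, a \in P -> dotv y' a <= 0.
  by move=> a aP; have := (proj2 Hanti') a aP; rewrite dotvNl oppr_ge0.
have Dp : domJ Rt z J p.
  move=> a aP _; rewrite /p dotvBl subr_ge0.
  by apply: le_trans (ydom a aP) (rho_dom HR Hz Hk Hk0 aP).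
have Dpg : domJ Rt z J (p *m g).
  move=> a aP _; rewrite Epg dotvBl subr_ge0.
  by apply: le_trans (y'dom a aP) (rho_dom HR Hz Hk Hk0 aP).
have Hq : forall a, a \in J -> dotv p a = 0 -> dotv y a = 0.
  move=> a; rewrite mem_filter => /andP[sa _]; rewrite /p dotvBl => /eqP; rewrite subr_eq0 => /eqP E1.
  have h1 := rho_simple HR Hz Hk Hk0 sa.
  have h2 := ydom a (simple_pos sa).
  apply/eqP; rewrite eq_le h2 /=; by rewrite -E1.
have Eyg : y *m g = y by apply: (fund HR Hz HJ HgJ Dp Dpg Hq).
have Epg' : p *m g = p by apply: (fund HR Hz HJ HgJ Dp Dpg).
have Eyy : y' = y by move: Epg'; rewrite Epg /p => /eqP; rewrite (inj_eq (addrI _)) eqr_opp => /eqP.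
have Elu : lam *m u = lam'.
  have : lam *m u *m v' = lam' *m v'.
    have -> : lam *m u *m v' = y *m g by rewrite Eg Elam !mulmxA.
    by rewrite Eyg -Eyy.
  by move=> /(congr1 (mulmx^~ v'^T)); rewrite -!mulmxA v1' !mulmx1.
have DI : domJ Rt z I lam by move=> a aP aI; apply: Hl.
have DI' : domJ Rt z I (lam *m u) by rewrite Elu => a aP aI; apply: Hl'.
have := fund HR Hz HI Hws DI DI' (fun a _ h => h).
by rewrite Elu => E2; move: ll'; rewrite E2 eqxx.
Qed.

End Core.



Fixpoint tuplesR (T : Type) (F : seq T) (m : nat) : seq (seq T) :=
  if m is m'.+1 then [seq c :: t | c <- F, t <- tuplesR F m'] else [:: [::]].

Lemma tuplesR_mem (T : eqType) (F : seq T) (t : seq T) :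
  all (mem F) t -> t \in tuplesR F (size t).
Proof.
elim: t => [|c t IH] /=; first by rewrite inE.
by case/andP=> cF tF; apply: allpairs_f => //; apply: IH.
Qed.

Section Orbit.
Variables (R : rcfType) (n : nat) (Rt : seq 'rV[R]_n) (I : seq 'rV[R]_n).
Hypothesis HR : root_system Rt.
Hypothesis HIR : all (mem Rt) I.
Local Notation V := 'rV[R]_n.

Definition orbI (mu : V) (x : V) : Prop :=
  exists ws, all (mem I) ws /\ x = mu *m word_mx ws.

Lemma IR (ws : seq V) : all (mem I) ws -> all (mem Rt) ws.
Proof. by move/allP=> H; apply/allP => x /H /(allP HIR). Qed.

Lemma pv_inj (x y : V) : [seq dotv x a | a <- Rt] = [seq dotv y a | a <- Rt] -> x = y.
Proof.
move/eq_in_map => H.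
have Hd : forall a, a \in Rt -> dotv (x - y) a = 0.
  by move=> a ain; rewrite dotvBl H // subrr.
have Hs : forall v, v \in <<Rt>>%VS -> dotv (x - y) v = 0.
  move=> v vin; rewrite (@coord_span _ _ _ (in_tuple Rt) v vin).
  rewrite dotvC dotv_suml_gen.
  apply: big1 => i _; rewrite dotvZl dotvC Hd ?mulr0 //.
  by apply: mem_nth; apply: (leq_trans (ltn_ord i)); rewrite size_tuple.
apply/eqP; rewrite -subr_eq0 -dotv_eq0; apply/eqP; apply: Hs.
by case: HR => _ _ -> _ _; apply: memvf.
Qed.

Lemma orbit_list (mu : V) : exists S : seq V, uniq S /\ forall x, x \in S <-> orbI mu x.
Proof.
pose pv (x : V) := [seq dotv x a | a <- Rt].
pose F := [seq dotv mu b | b <- Rt].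
pose T := tuplesR F (size Rt).
pose e (t : seq R) : V := epsilon (inhabits 0) (fun x => orbI mu x /\ pv x = t).
pose inO (x : V) : bool := if excluded_middle_informative (orbI mu x) then true else false.
exists (undup [seq x <- map e T | inO x]); split; first exact: undup_uniq.
move=> x; rewrite mem_undup mem_filter; split.
  by case/andP; rewrite /inO; case: excluded_middle_informative.
move=> Ox; have -> : inO x by rewrite /inO; case: excluded_middle_informative.
have ex : exists y, orbI mu y /\ pv y = pv x by exists x.
have [Oe Ee] := epsilon_spec (inhabits 0) _ ex.
have -> : x = e (pv x) by apply: pv_inj; exact: (esym Ee).
apply: map_f; rewrite /T -(size_map (fun a => dotv x a) Rt); apply: tuplesR_mem.
case: Ox => ws [Hws ->]; apply/allP => t /mapP [a ain ->].
have [O1 O2] := word_orthR HR (IR Hws).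
rewrite /= dotv_mulmx word_tr; apply: map_f; apply: word_root => //.
by rewrite all_rev; apply: IR.
Qed.

End Orbit.



Section Poly.
Variables (R : rcfType) (n : nat).
Local Notation C := (complex R).

Definition Nc (y : 'rV[C]_n) : C := \sum_i y 0 i ^+ 2.

Lemma NcE (y : 'rV[C]_n) : Nc y = (y *m y^T) 0 0.
Proof. by rewrite /Nc mxE; apply: eq_bigr => i _; rewrite mxE expr2. Qed.

Lemma Nc_orth (U : 'M[C]_n) y : U *m U^T = 1%:M -> Nc (y *m U) = Nc y.
Proof. by move=> H; rewrite !NcE trmx_mul mulmxA -(mulmxA y) H mulmx1. Qed.

Lemma Nc_toC (d : 'rV[R]_n) : Nc (toC d) = real_complex R (dotv d d).
Proof.
rewrite /Nc dotvE rmorph_sum; apply: eq_bigr => i _.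
by rewrite /toC mxE expr2 rmorphM.
Qed.

Lemma toC_mxM (A B : 'M[R]_n) : toC_mx (A *m B) = toC_mx A *m toC_mx B.
Proof. exact: map_mxM. Qed.

Lemma toC_M (x : 'rV[R]_n) (A : 'M[R]_n) : toC (x *m A) = toC x *m toC_mx A.
Proof. exact: map_mxM. Qed.

Lemma toC_mxT (A : 'M[R]_n) : (toC_mx A)^T = toC_mx A^T.
Proof. exact: map_trmx. Qed.

Lemma toC_mx1 : toC_mx (1%:M : 'M[R]_n) = 1%:M.
Proof. exact: map_mx1. Qed.

Lemma inv_orthC (W : 'M[C]_n) : W *m W^T = 1%:M -> invmx W = W^T.
Proof.
move=> H; have [Wu _] := mulmx1_unit H.
by rewrite -[invmx W]mulmx1 -H mulmxA mulVmx // mul1mx.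
Qed.

Definition qpoly (S : seq 'rV[R]_n) : {mpoly C[n]} :=
  \prod_(s <- S) \sum_(i < n) ('X_i - ((toC s) 0 i)%:MP) ^+ 2.

Lemma peval_q S x : peval (qpoly S) x = \prod_(s <- S) Nc (x - toC s).
Proof.
rewrite /peval /qpoly rmorph_prod; apply: eq_bigr => s _.
rewrite rmorph_sum; apply: eq_bigr => i _.
by rewrite rmorphXn rmorphB /= mevalXU mevalC !mxE.
Qed.

End Poly.

Unset Implicit Arguments.
Theorem mainTheorem9 (R : rcfType) (n : nat) (Rt : seq 'rV[R]_n) (z : 'rV[R]_n)
  (k : 'rV[R]_n -> R) (I : seq 'rV[R]_n) :
  root_system Rt -> regular Rt z ->
  multiplicity Rt k -> (forall a, a \in Rt -> 0 <= k a) ->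
  all (simple_rootb Rt z) I ->
  forall lam lam' mu mu' : 'rV[R]_n,
    dom_weight_I Rt z I lam -> dom_weight_I Rt z I lam' -> lam != lam' ->
    is_tilde Rt z k lam mu -> is_tilde Rt z k lam' mu' ->
    exists q : {mpoly (complex R)[n]},
      WI_invariant I q /\ peval q (toC mu) != peval q (toC mu').
Proof.
move=> HR Hz Hk Hk0 HI lam lam' mu mu' Hl Hl' ll' Ht Ht'.
have HIR : all (mem Rt) I by apply/allP => x /(allP HI) /simple_root.
have Hcore := core HR Hz Hk Hk0 HI Hl Hl' ll' Ht Ht'.
have [S [uS HS]] := orbit_list HR HIR mu.
exists (qpoly S); split.
  move=> w [ws [Hws ->]] x.
  have [O1 O2] := word_orthR HR (IR HIR Hws).
  set W := word_mx ws in O1 O2 *.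
  have U1 : toC_mx W *m (toC_mx W)^T = 1%:M by rewrite toC_mxT -toC_mxM O1 toC_mx1.
  have U2 : (toC_mx W)^T *m toC_mx W = 1%:M by rewrite toC_mxT -toC_mxM O2 toC_mx1.
  rewrite inv_orthC // !peval_q.
  have U3 : (toC_mx W)^T *m (toC_mx W)^T^T = 1%:M by rewrite trmxK.
  transitivity (\prod_(s <- S) Nc (x - toC (s *m W))).
    apply: eq_bigr => s _.
    rewrite -(Nc_orth (x - toC (s *m W)) U3) mulmxBl toC_M -mulmxA U1 mulmx1.
    done.
  rewrite -(big_map (fun s => s *m W) xpredT (fun s => Nc (x - toC s))).
  apply: perm_big; apply: uniq_perm => //.
    by rewrite map_inj_uniq // => a b E; rewrite -(mulmx1 a) -(mulmx1 b) -O1 !mulmxA E.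
  move=> y; apply/idP/idP.
    case/mapP => s /HS [ws' [Hws' ->]] ->; apply/HS.
    by exists (ws ++ ws'); rewrite all_cat Hws Hws' word_cat mulmxA.
  move=> /HS [ws' [Hws' Ey]]; apply/mapP; exists (y *m W^T).
    apply/HS; exists (rev ws ++ ws'); rewrite all_cat all_rev Hws Hws' word_cat -word_tr.
    by rewrite Ey mulmxA.
  by rewrite -mulmxA O2 mulmx1.
rewrite !peval_q.
have muS : mu \in S by apply/HS; exists [::]; rewrite /= mulmx1.
rewrite (big_rem _ muS) /= subrr.
have -> : Nc (0 : 'rV[complex R]_n) = 0 by rewrite /Nc big1 // => i _; rewrite mxE expr0n.
rewrite mul0r eq_sym prodf_seq_neq0; apply/allP => s sS /=.
rewrite -map_mxB Nc_toC fmorph_eq0 dotv_eq0 subr_eq0.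
have [ws [Hws ->]] := (HS s).1 sS.
by rewrite eq_sym; apply: Hcore.
Qed.
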